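(* Let $(\mathbf{X}^0,\mathbf{p})$ be a pEF1 $\{1,k\}$-payment equilibrium. If $(\mathbf{X}^0,\mathbf{p})$ is not $(2-1/k)$-pEFX, then $\min_{i\in N_L}p(X^0_i)<k$.
   Context: Fix $k>1$. Agents $N$, chores $M$, additive costs $c_i(e)\in\{1,k\}$. An allocation partitions $M$ into bundles. A payment vector assigns $p(e)>0$, $p(X)=\sum_{e\in X}p(e)$; $\alpha_{i,e}=c_i(e)/p(e)$, $\alpha_i=\min_e\alpha_{i,e}$, $\mathsf{MPB}_i=\{e:\alpha_{i,e}=\alpha_i\}$; $(\mathbf{X},\mathbf{p})$ is a $\{1,k\}$-payment equilibrium if $X_i\subseteq\mathsf{MPB}_i$ for all $i$ and $p(e)\in\{1,k\}$ for all $e$. It is pEF1 if for all $i,j$, $X_i=\emptyset$ or some $e\in X_i$ has $p(X_i\setminus\{e\})\le p(X_j)$; it is $\beta$-pEFX if for all $i,j$, $X_i=\emptyset$ or $p(X_i\setminus\{e\})\le\beta\,p(X_j)$ for all $e\in X_i$. $L=\{e:p(e)=1\}$, $N_L=\{i:X^0_i\subseteq L\}$. *)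

(* Defs.v *)
From mathcomp Require Import all_boot all_order all_algebra.
Set Implicit Arguments. Unset Strict Implicit. Unset Printing Implicit Defensive.
Import Order.TTheory GRing.Theory Num.Theory.
Local Open Scope ring_scope.

(* Agents: finite type A; chores: finite type C; values in a real field R. *)
Section Defs.
Variables (R : realFieldType) (A C : finType).

Definition is_allocation (X : A -> {set C}) : Prop :=
  (forall i j, i != j -> [disjoint X i & X j]) /\
  (forall e : C, exists i, e \in X i).

Definition pay (p : C -> R) (S : {set C}) : R := \sum_(e in S) p e.

Definition alpha (c : A -> C -> R) (p : C -> R) (i : A) (e : C) : R :=
  c i e / p e.

Definition in_MPB (c : A -> C -> R) (p : C -> R) (i : A) (e : C) : Prop :=
  forall e' : C, alpha c p i e <= alpha c p i e'.

Definition payment_eq_1k (k : R) (c : A -> C -> R)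
    (X : A -> {set C}) (p : C -> R) : Prop :=
  (forall i e, e \in X i -> in_MPB c p i e) /\
  (forall e, p e = 1 \/ p e = k).

Definition pEF1 (X : A -> {set C}) (p : C -> R) : Prop :=
  forall i j, X i = set0 \/
    exists2 e, e \in X i & pay p (X i :\ e) <= pay p (X j).

Definition beta_pEFX (beta : R) (X : A -> {set C}) (p : C -> R) : Prop :=
  forall i j, X i = set0 \/
    forall e, e \in X i -> pay p (X i :\ e) <= beta * pay p (X j).

Definition Lset (p : C -> R) : {set C} := [set e | p e == 1].

Definition NL (X : A -> {set C}) (p : C -> R) : {set A} :=
  [set i | X i \subset Lset p].

End Defs.

(* Main.v *)
Require Import Defs.
From mathcomp Require Import all_boot all_order all_algebra.
From mathcomp Require Import ring lra.
Import Order.TTheory GRing.Theory Num.Theory.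
Local Open Scope ring_scope.

Theorem lemma8 (R : realFieldType) (A C : finType) (k : R)
  (c : A -> C -> R) (X : A -> {set C}) (p : C -> R) :
  1 < k ->
  (forall i e, c i e = 1 \/ c i e = k) ->
  is_allocation X ->
  payment_eq_1k k c X p ->
  pEF1 X p ->
  ~ beta_pEFX (2 - k^-1) X p ->
  exists2 i, i \in NL X p & pay p (X i) < k.
Proof.
move=> k1 _ _ [_ hp] hEF1 hnot.
have p1 : forall e, 1 <= p e by move=> e; case: (hp e) => ->; lra.
have pk : forall e, p e <= k by move=> e; case: (hp e) => ->; lra.
have p0 : forall e, 0 <= p e by move=> e; have := p1 e; lra.
have payD : forall (S : {set C}) e, e \in S -> pay p S = p e + pay p (S :\ e).
  by move=> S e he; rewrite /pay (big_setD1 e he).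
have pay0 : forall S : {set C}, 0 <= pay p S by move=> S; apply: sumr_ge0 => e _.
case: (boolP [exists i, exists j, exists e,
   (e \in X i) && ((2 - k^-1) * pay p (X j) < pay p (X i :\ e))]); last first.
  move=> /negP hn; exfalso; apply: hnot => i j.
  case: (eqVneq (X i) set0) => [-> | _]; first by left.
  right => e he; rewrite leNgt; apply/negP => hlt; apply: hn.
  by apply/existsP; exists i; apply/existsP; exists j; apply/existsP; exists e;
    rewrite he hlt.
move=> /existsP [i /existsP [j /existsP [e /andP [he hlt]]]].
case: (hEF1 i j) => [hX | [e' he' hle]].
  by move: he; rewrite hX inE.
have E1 := payD _ _ he; have E2 := payD _ _ he'.
have hpe := p1 e; have hpe' := pk e'.
set q := pay p (X j) in hlt hle *.
have hq : q < k.
  have k0 : 0 < k by lra.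
  have ki : k * k^-1 = 1 by rewrite mulfV // gt_eqF.
  have : (2 - k^-1) * q < q + k - 1 by lra.
  move=> h.
  have h2 : k * ((2 - k^-1) * q) < k * (q + k - 1) by rewrite ltr_pM2l.
  have h3 : k * ((2 - k^-1) * q) = (2 * k - k * k^-1) * q by ring.
  rewrite ki in h3; rewrite h3 in h2.
  have : (k - 1) * q < (k - 1) * k by lra.
  by rewrite ltr_pM2l // subr_gt0.
exists j => //.
rewrite inE; apply/subsetP => x hx; rewrite inE.
case: (hp x) => [-> // | hpx]; exfalso.
have := payD _ _ hx; have := pay0 (X j :\ x); rewrite -/q hpx; lra.
Qed.
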